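(* Let $T$ be a ranked monad on $\mathbf{Set}$. Then the set of points $\mathrm{pt}(\mathrm{LB}_1T)$ of the locale of transitions is in bijection with the set $\mathbb{B}_1T$ of morphisms of the behaviour category of $T$.
   Context: A monad $T$ on $\mathbf{Set}$: sets $TA$, $\mathrm{return}\,a\in TA$, $\mathbin{\gg\!=}\colon TA\times(TB)^A\to TB$ with the monad laws; $t\gg s:=t\mathbin{\gg\!=}\lambda a.s$. Ranked of rank $\kappa$: every $t\in TA$ is $t'\mathbin{\gg\!=}\lambda i.\mathrm{return}\,f(i)$ with $t'\in TI$, $|I|<\kappa$ ($\kappa$ regular). $1=\{*\}$, $2=\{0,1\}$. Behaviour category: an admissible behaviour is a natural transformation $\beta\colon T\to\mathrm{id}_{\mathbf{Set}}$ with $\beta(t\mathbin{\gg\!=}u)=\beta(t\gg u(\beta(t)))$ for all $t\in TA$, $u\colon A\to TB$. For such $\beta$, $\sim_\beta$ is the least equivalence relation on $T1$ with $(t\mathbin{\gg\!=}u)\sim_\beta(t\gg u(\beta(t)))$ for all $t\in TA$, $u\colon A\to T1$. $\mathbb{B}_1T$ is the set of pairs $(\beta,[t]_\beta)$ with $\beta$ an admissible behaviour and $[t]_\beta$ a $\sim_\beta$-class of $T1$. Behaviour locale $\mathrm{LB}_0T$: frame presented by generators $[b]$ ($b\in T2$) subject to $[t\mapsto a]\wedge[t\mapsto a']=\bot$ ($a\ne a'$), $[t\gg\mathrm{return}\,a\mapsto a]=\top$, $[t\mathbin{\gg\!=}u\mapsto b]=\bigvee_a[t\mapsto a]\wedge[t\gg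 u(a)\mapsto b]$ for all $t\in TA$, $u\colon A\to TB$, $b\in B$, where $[t\mapsto a]:=[t\mathbin{\gg\!=}\lambda a'.\mathrm{return}(\delta_a(a'))]$, $\delta_a(a')=1$ iff $a'=a$. Trace equivalence: $[\![m\sim_1m']\!]=\bigvee\{[t\mapsto a]: |A|\le\kappa, t\in TA, u,u'\colon A\to T1, a\in A, u(a)=u'(a), m=t\mathbin{\gg\!=}u, m'=t\mathbin{\gg\!=}u'\}$; for $k\ge2$, $[\![m_1\sim_km_k]\!]=\bigvee\{\bigwedge_{i=1}^{k-1}[\![m_i\sim_1m_{i+1}]\!]: m_2,\ldots,m_{k-1}\in T1\}$; $[\![m\sim m']\!]=\bigvee_{k\ge1}[\![m\sim_km']\!]$; for complemented $b$, $m\sim_bm'$ iff $b\le[\![m\sim m']\!]$. The locale of transitions $\mathrm{LB}_1T$ has frame the set of functions $w\colon T1\to\mathcal{O}(\mathrm{LB}_0T)$ with $b\wedge w(m_1)=b\wedge w(m_2)$ whenever $b$ is complemented and $m_1\sim_bm_2$, ordered pointwise. Points of a locale $L$ are frame homomorphisms $\mathcal{O}(L)\to\{\bot,\top\}$. *)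

(* Defs.v *)
From Stdlib Require Import List Relations ClassicalDescription.
Import ListNotations.

Set Implicit Arguments.
Unset Strict Implicit.

Record monad := Monad {
  M :> Type -> Type;
  ret : forall A : Type, A -> M A;
  bind : forall A B : Type, M A -> (A -> M B) -> M B;
  bind_ret_l : forall A B (a : A) (f : A -> M B), bind (ret a) f = f a;
  bind_ret_r : forall A (t : M A), bind t (@ret A) = t;
  bind_assoc : forall A B C (t : M A) (f : A -> M B) (g : B -> M C),
      bind (bind t f) g = bind t (fun a => bind (f a) g)
}.
Arguments ret {m A}.
Arguments bind {m A B}.

Definition mthen (T : monad) A B (t : T A) (s : T B) : T B := bind t (fun _ => s).

Definition inj_into (A B : Type) : Prop :=
  exists f : A -> B, forall x y, f x = f y -> x = y.
(* |I| < kappa, with kappa represented by a type K *)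
Definition card_lt (I K : Type) : Prop := inj_into I K /\ ~ inj_into K I.
Definition card_le (A K : Type) : Prop := inj_into A K.
Definition regular (K : Type) : Prop :=
  inj_into nat K /\
  forall (I : Type) (F : I -> Type),
    card_lt I K -> (forall i, card_lt (F i) K) -> card_lt {i : I & F i} K.

Definition has_rank (T : monad) (K : Type) : Prop :=
  forall (A : Type) (t : T A), exists (I : Type) (t' : T I) (f : I -> A),
    card_lt I K /\ t = bind t' (fun i => ret (f i)).

Definition fmap (T : monad) A B (f : A -> B) (t : T A) : T B :=
  bind t (fun a => ret (f a)).

Definition admissible (T : monad) (beta : forall A : Type, T A -> A) : Prop :=
  (forall A B (f : A -> B) (t : T A), beta B (fmap f t) = f (beta A t)) /\
  (forall A B (t : T A) (u : A -> T B),
      beta B (bind t u) = beta B (mthen t (u (beta A t)))).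

Definition beh_step (T : monad) (beta : forall A : Type, T A -> A)
  (m m' : T unit) : Prop :=
  exists (A : Type) (t : T A) (u : A -> T unit),
    m = bind t u /\ m' = mthen t (u (beta A t)).

Definition beh_eq (T : monad) (beta : forall A : Type, T A -> A) :
  T unit -> T unit -> Prop := clos_refl_sym_trans _ (beh_step beta).

Definition is_beh_class (T : monad) (beta : forall A : Type, T A -> A)
  (C : T unit -> Prop) : Prop :=
  exists t : T unit, forall m, C m <-> beh_eq beta t m.

Definition B1 (T : monad) : Type :=
  { bp : { beta : forall A : Type, T A -> A | admissible beta } &
    { C : T unit -> Prop | is_beh_class (proj1_sig bp) C } }.

(* 2 = bool, with 0 = false and 1 = true. *)
Definition delta (A : Type) (a a' : A) : bool :=
  if excluded_middle_informative (a' = a) then true else false.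

Definition mapsto (T : monad) A (t : T A) (a : A) : T bool :=
  bind t (fun a' => ret (delta a a')).

(* The free frame on generators T2: down-sets of the free meet-semilattice,
   i.e. sets of finite lists of generators (a list standing for the meet of
   its members) closed under enlarging the list. *)
Definition Fin (T : monad) := list (T bool).

Definition upclosed (T : monad) (D : Fin T -> Prop) : Prop :=
  forall s s', incl s s' -> D s -> D s'.

Definition gen (T : monad) (b : T bool) : Fin T -> Prop := fun s => In b s.

(* The defining relations (l = r) of LB_0 T, as pairs of free-frame elements
   (meet = intersection, join = union, top = everything, bottom = empty). *)
Inductive LB0_rel (T : monad) : (Fin T -> Prop) -> (Fin T -> Prop) -> Prop :=
| rel_disj : forall (A : Type) (t : T A) (a a' : A), a <> a' ->
    LB0_rel (fun s => gen (mapsto t a) s /\ gen (mapsto t a') s) (fun _ => False)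
| rel_ret : forall (A B : Type) (t : T A) (a : B),
    LB0_rel (gen (mapsto (mthen t (ret a)) a)) (fun _ => True)
| rel_bind : forall (A B : Type) (t : T A) (u : A -> T B) (b : B),
    LB0_rel (gen (mapsto (bind t u) b))
            (fun s => exists a : A, gen (mapsto t a) s /\ gen (mapsto (mthen t (u a)) b) s).

(* The presented frame is (isomorphic to) the set of free-frame elements x
   saturated for the relations: for every relation (l,r) and every basic
   element c,  l /\ c <= x  <->  r /\ c <= x. *)
Definition saturated (T : monad) (D : Fin T -> Prop) : Prop :=
  forall l r, LB0_rel l r -> forall s : Fin T,
    (forall s', incl s s' -> l s' -> D s') <-> (forall s', incl s s' -> r s' -> D s').

Record O0 (T : monad) := MkO0 {
  o0 :> Fin T -> Prop;
  o0_up : upclosed o0;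
  o0_sat : saturated o0
}.

Definition le0 (T : monad) (x y : O0 T) : Prop := forall s, x s -> y s.

(* least element of O(LB_0 T) containing a free-frame element P (the image of
   P under the quotient map); joins in O(LB_0 T) are cl of unions, meets are
   intersections. *)
Definition cl (T : monad) (P : Fin T -> Prop) : Fin T -> Prop :=
  fun s => forall E : O0 T, (forall s', P s' -> E s') -> E s.

Definition complemented (T : monad) (b : O0 T) : Prop :=
  exists c : O0 T,
    (forall x : O0 T, le0 x b -> le0 x c -> forall y, le0 x y) /\
    (forall x : O0 T, le0 b x -> le0 c x -> forall y, le0 y x).

Definition tr1 (T : monad) (K : Type) (m m' : T unit) : Fin T -> Prop :=
  cl (fun s => exists (A : Type) (t : T A) (u u' : A -> T unit) (a : A),
        card_le A K /\ u a = u' a /\ m = bind t u /\ m' = bind t u' /\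
        cl (gen (mapsto t a)) s).

Fixpoint chain (T : monad) (K : Type) (s : Fin T) (x : T unit)
  (ms : list (T unit)) (y : T unit) : Prop :=
  match ms with
  | [] => tr1 K x y s
  | m :: ms' => tr1 K x m s /\ chain K s m ms' y
  end.

Definition trk (T : monad) (K : Type) (k : nat) (m1 mk : T unit) : Fin T -> Prop :=
  cl (fun s => exists ms : list (T unit), length ms = k - 2 /\ chain K s m1 ms mk).

Definition tr (T : monad) (K : Type) (m m' : T unit) : Fin T -> Prop :=
  cl (fun s => tr1 K m m' s \/ exists k, 2 <= k /\ trk K k m m' s).

Definition sim_b (T : monad) (K : Type) (b : O0 T) (m m' : T unit) : Prop :=
  forall s, b s -> tr K m m' s.

Definition O1 (T : monad) (K : Type) : Type :=
  { w : T unit -> O0 T |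
    forall b : O0 T, complemented b -> forall m1 m2, sim_b K b m1 m2 ->
      forall s, (b s /\ w m1 s) <-> (b s /\ w m2 s) }.

Definition le1 (T : monad) (K : Type) (w w' : O1 T K) : Prop :=
  forall m, le0 (proj1_sig w m) (proj1_sig w' m).

(* Written order-theoretically: p preserves the top, binary meets and
   arbitrary joins (meets/joins being glbs/lubs for the frame order). *)
Definition frame_hom2 (X : Type) (le : X -> X -> Prop) (p : X -> bool) : Prop :=
  (forall w, (forall w', le w' w) -> p w = true) /\
  (forall w w1 w2, le w w1 -> le w w2 ->
     (forall z, le z w1 -> le z w2 -> le z w) -> p w = andb (p w1) (p w2)) /\
  (forall (S : X -> Prop) w, (forall x, S x -> le x w) ->
     (forall z, (forall x, S x -> le x z) -> le w z) ->
     (p w = true <-> exists x, S x /\ p x = true)).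

Definition pt_LB1 (T : monad) (K : Type) : Type :=
  { p : O1 T K -> bool | frame_hom2 (@le1 T K) p }.

Definition in_bijection (A B : Type) : Prop :=
  exists (f : A -> B) (g : B -> A),
    (forall x, g (f x) = x) /\ (forall y, f (g y) = y).

(* Main.v *)
Require Import Defs.
From Stdlib Require Import List Relations ClassicalDescription Classical
  FunctionalExtensionality PropExtensionality ProofIrrelevance ClassicalEpsilon Lia.
Import ListNotations.

Section Frame0.
Variable T : monad.

Lemma up0 (D : O0 T) s s' : incl s s' -> D s -> D s'.
Proof. intros H1 H2; exact (@o0_up T D s s' H1 H2). Qed.
Lemma sat0s (D : O0 T) {l r} : LB0_rel l r -> forall s,
  (forall s', incl s s' -> l s' -> D s') <-> (forall s', incl s s' -> r s' -> D s').
Proof. intros H s. apply (@o0_sat T D l r H s). Qed.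

Lemma cl_incl (P : Fin T -> Prop) s : P s -> cl P s.
Proof. intros H E HE; apply HE; exact H. Qed.

Lemma cl_mono (P Q : Fin T -> Prop) : (forall s, P s -> Q s) -> forall s, cl P s -> cl Q s.
Proof. intros H s Hs E HE; apply Hs; intros s' Hs'; apply HE, H, Hs'. Qed.

Lemma cl_min (P : Fin T -> Prop) (E : O0 T) : (forall s, P s -> E s) -> forall s, cl P s -> E s.
Proof. intros H s Hs; apply Hs, H. Qed.

Lemma cl_up (P : Fin T -> Prop) : upclosed (cl P).
Proof. intros s s' Hi Hs E HE. apply (up0 E s s' Hi). apply Hs, HE. Qed.

Lemma cl_sat (P : Fin T -> Prop) : saturated (cl P).
Proof.
  intros l r Hlr s; split; intros H s' Hs' Hx E HE.
  - apply (proj1 (sat0s E Hlr s)); auto.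
    intros s'' H1 H2; apply H; auto.
  - apply (proj2 (sat0s E Hlr s)); auto.
    intros s'' H1 H2; apply H; auto.
Qed.

Definition clO (P : Fin T -> Prop) : O0 T := MkO0 (cl_up P) (cl_sat P).

Lemma gen_up (b : T bool) : upclosed (gen b).
Proof. intros s s' Hi H; apply Hi, H. Qed.

Lemma rel_up (l r : Fin T -> Prop) : LB0_rel l r -> upclosed l /\ upclosed r.
Proof.
  intros H; destruct H; split; intros s s' Hi Hs; unfold gen in *; auto.
  - destruct Hs; split; apply Hi; auto.
  - destruct Hs as [a0 [H1 H2]]; exists a0; split; apply Hi; auto.
Qed.

(* Heyting implication by a basic element *)
Definition Eimp (D : O0 T) (s0 : Fin T) : Fin T -> Prop := fun t => D (t ++ s0).

Lemma incl_app_l (s s0 : Fin T) : incl s (s ++ s0).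
Proof. intros x Hx; apply in_or_app; auto. Qed.
Lemma incl_app_r (s s0 : Fin T) : incl s0 (s ++ s0).
Proof. intros x Hx; apply in_or_app; auto. Qed.

Lemma Eimp_up D s0 : upclosed (Eimp D s0).
Proof.
  intros t t' Hi H; unfold Eimp in *. apply (up0 D (t ++ s0)); auto.
  intros x Hx; apply in_app_or in Hx; apply in_or_app; destruct Hx; auto.
Qed.

Lemma Eimp_sat D s0 : saturated (Eimp D s0).
Proof.
  intros l r Hlr s. destruct (rel_up _ _ Hlr) as [Ul Ur].
  assert (aux : forall X : Fin T -> Prop, upclosed X ->
    (forall s', incl s s' -> X s' -> Eimp D s0 s') <->
    (forall s'', incl (s ++ s0) s'' -> X s'' -> D s'')).
  { intros X UX; split; intros H.
    - intros s'' Hi Hx. apply (up0 D (s'' ++ s0)).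
      + intros x Hx'; apply in_app_or in Hx'; destruct Hx' as [Hx'|Hx']; auto.
        apply Hi, incl_app_r, Hx'.
      + apply H; auto. intros x Hx'; apply Hi, incl_app_l, Hx'.
    - intros s' Hi Hx. unfold Eimp. apply H.
      + intros x Hx'; apply in_app_or in Hx'; apply in_or_app; destruct Hx'; auto.
      + apply (UX s'); auto; apply incl_app_l. }
  rewrite (aux l Ul), (aux r Ur). apply (sat0s D Hlr).
Qed.

Definition EimpO D s0 : O0 T := MkO0 (Eimp_up D s0) (Eimp_sat D s0).

Definition meetI_p (I : Type) (f : I -> O0 T) : Fin T -> Prop := fun s => forall i, f i s.
Lemma meetI_up I f : upclosed (@meetI_p I f).
Proof. intros s s' Hi H i; apply (up0 (f i) s s' Hi), H. Qed.
Lemma meetI_sat I f : saturated (@meetI_p I f).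
Proof.
  intros l r Hlr s; unfold meetI_p; split; intros H s' Hi Hx i.
  - apply (proj1 (sat0s (f i) Hlr s)); auto; intros; apply H; auto.
  - apply (proj2 (sat0s (f i) Hlr s)); auto; intros; apply H; auto.
Qed.
Definition meetI I f : O0 T := MkO0 (@meetI_up I f) (@meetI_sat I f).

Definition meet0_p (x y : O0 T) : Fin T -> Prop := fun s => x s /\ y s.
Lemma meet0_up x y : upclosed (meet0_p x y).
Proof. intros s s' Hi [H1 H2]; split; [apply (up0 x s) | apply (up0 y s)]; auto. Qed.
Lemma meet0_sat x y : saturated (meet0_p x y).
Proof.
  intros l r Hlr s; unfold meet0_p; split; intros H s' Hi Hx; split.
  - apply (proj1 (sat0s x Hlr s)); auto; intros; apply H; auto.
  - apply (proj1 (sat0s y Hlr s)); auto; intros; apply H; auto.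
  - apply (proj2 (sat0s x Hlr s)); auto; intros; apply H; auto.
  - apply (proj2 (sat0s y Hlr s)); auto; intros; apply H; auto.
Qed.
Definition meet0 x y : O0 T := MkO0 (meet0_up x y) (meet0_sat x y).

Lemma nucleus (P Q : Fin T -> Prop) : upclosed P -> upclosed Q ->
  forall s, cl P s -> cl Q s -> cl (fun s => P s /\ Q s) s.
Proof.
  intros UP UQ s HP HQ E HE.
  set (F := meetI _ (fun q : {q : Fin T | Q q} => EimpO E (proj1_sig q))).
  assert (HF : F s).
  { apply (cl_min P F); auto. intros p Hp [q Hq]; simpl; unfold Eimp.
    apply HE; split.
    - apply (UP p); auto; apply incl_app_l.
    - apply (UQ q); auto; apply incl_app_r. }
  assert (HQ' : EimpO E s s).
  { apply (cl_min Q (EimpO E s)); auto. intros q Hq; simpl; unfold Eimp.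
    apply (up0 E (s ++ q)).
    - intros x Hx; apply in_app_or in Hx; apply in_or_app; destruct Hx; auto.
    - exact (HF (exist _ q Hq)). }
  simpl in HQ'; unfold Eimp in HQ'. apply (up0 E (s ++ s)); auto.
  intros x Hx; apply in_app_or in Hx; destruct Hx; auto.
Qed.

Lemma o0_cl (D : O0 T) s : cl D s -> D s.
Proof. apply cl_min; auto. Qed.

Lemma sat0 {l r : Fin T -> Prop} (D : O0 T) : LB0_rel l r ->
  ((forall s, l s -> D s) <-> (forall s, r s -> D s)).
Proof.
  intros Hlr. pose proof (sat0s D Hlr []) as H.
  split; intros H1 s Hs.
  - apply (proj1 H); auto. intros x Hx; destruct Hx.
  - apply (proj2 H); auto. intros x Hx; destruct Hx.
Qed.

Lemma R_ret A B (t : T A) (a : B) (D : O0 T) :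
  (forall s, gen (mapsto (mthen t (ret a)) a) s -> D s) -> forall s, D s.
Proof. intros H s. apply (proj1 (sat0 D (rel_ret t a)) H s I). Qed.

Lemma R_disj A (t : T A) a a' (D : O0 T) : a <> a' ->
  forall s, gen (mapsto t a) s -> gen (mapsto t a') s -> D s.
Proof.
  intros Hne s H1 H2. apply (proj2 (sat0 D (rel_disj t Hne))); auto.
  intros _ [].
Qed.

Lemma R_bind A B (t : T A) (u : A -> T B) b (D : O0 T) :
  (forall s, gen (mapsto (bind t u) b) s -> D s) ->
  forall a s, gen (mapsto t a) s -> gen (mapsto (mthen t (u a)) b) s -> D s.
Proof.
  intros H a s H1 H2. apply (proj1 (sat0 D (rel_bind t u b)) H). exists a; auto.
Qed.

Lemma R_bind' A B (t : T A) (u : A -> T B) b (D : O0 T) :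
  (forall a s, gen (mapsto t a) s -> gen (mapsto (mthen t (u a)) b) s -> D s) ->
  forall s, gen (mapsto (bind t u) b) s -> D s.
Proof.
  intros H. apply (proj2 (sat0 D (rel_bind t u b))). intros s [a [H1 H2]]; eauto.
Qed.

Lemma cover A (t : T A) (D : O0 T) :
  (forall a s, gen (mapsto t a) s -> D s) -> forall s, D s.
Proof.
  intros H. apply (R_ret _ _ t tt). 
  apply (R_bind' _ _ t (fun _ => ret tt)). intros a s H1 H2; eauto.
Qed.

Lemma mapsto_compl A (t : T A) a : complemented (clO (gen (mapsto t a))).
Proof.
  exists (clO (fun s => exists a', a' <> a /\ gen (mapsto t a') s)). split.
  - intros x H1 H2 y s Hs.
    assert (Hc : cl (fun s => gen (mapsto t a) s /\ exists a', a' <> a /\ gen (mapsto t a') s) s).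
    { apply nucleus.
      - apply gen_up.
      - intros s1 s2 Hi [a' [Ha Hg]]; exists a'; split; auto; apply Hi; auto.
      - apply (H1 s Hs).
      - apply (H2 s Hs). }
    clear Hs; revert s Hc; apply (cl_min _ y). intros s' [Hg [a' [Ha Hg']]].
    apply (R_disj _ t a a'); auto.
  - intros x H1 H2 y s _. apply (cover _ t x). intros a' s' Hg.
    destruct (classic (a' = a)) as [->|Hne].
    + apply H1. apply cl_incl; auto.
    + apply H2. apply cl_incl. exists a'; auto.
Qed.

End Frame0.
Arguments up0 {T}.
Arguments sat0s {T}.
Arguments cl_incl {T}.
Arguments cl_mono {T}.
Arguments cl_min {T}.
Arguments cl_up {T}.
Arguments cl_sat {T}.
Arguments clO {T}.
Arguments gen_up {T}.
Arguments rel_up {T}.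
Arguments Eimp {T}.
Arguments incl_app_l {T}.
Arguments incl_app_r {T}.
Arguments nucleus {T}.
Arguments meet0 {T}.
Arguments meet0_p {T}.
Arguments meetI {T}.
Arguments meetI_p {T}.
Arguments o0_cl {T}.
Arguments sat0 {T}.
Arguments R_ret {T A B}.
Arguments R_disj {T A}.
Arguments R_bind {T A B}.
Arguments R_bind' {T A B}.
Arguments cover {T A}.
Arguments mapsto_compl {T A}.

Lemma mapsto_true (T : monad) (x : T bool) : mapsto x true = x.
Proof.
  unfold mapsto. rewrite <- (bind_ret_r x) at 2. f_equal.
  apply functional_extensionality; intros b. unfold delta.
  destruct b; destruct (ClassicalDescription.excluded_middle_informative _) as [e|n];
  first [reflexivity | exfalso; first [apply n; reflexivity | discriminate e]].
Qed.
Section Frame1.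
Variable T : monad.
Variable K : Type.

Definition W (w : O1 T K) (m : T unit) : O0 T := proj1_sig w m.

Lemma W_compat (w : O1 T K) {b : O0 T} : complemented b -> forall {m1 m2}, sim_b K b m1 m2 ->
  forall s, b s -> W w m1 s -> W w m2 s.
Proof. intros Hb m1 m2 Hs s H1 H2. exact (proj2 (proj1 (proj2_sig w b Hb m1 m2 Hs s) (conj H1 H2))). Qed.

Lemma W_compat' (w : O1 T K) {b : O0 T} : complemented b -> forall {m1 m2}, sim_b K b m1 m2 ->
  forall s, b s -> W w m2 s -> W w m1 s.
Proof. intros Hb m1 m2 Hs s H1 H2. exact (proj2 (proj2 (proj2_sig w b Hb m1 m2 Hs s) (conj H1 H2))). Qed.

Definition k0 (x : O0 T) : O1 T K :=
  exist (fun w : T unit -> O0 T => forall b : O0 T, complemented b -> forall m1 m2, sim_b K b m1 m2 ->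
      forall s, (b s /\ w m1 s) <-> (b s /\ w m2 s))
    (fun _ => x) (fun b _ m1 m2 _ s => iff_refl _).

Lemma meet1_ok (w1 w2 : O1 T K) : forall b : O0 T, complemented b -> forall m1 m2, sim_b K b m1 m2 ->
  forall s, (b s /\ meet0 (W w1 m1) (W w2 m1) s) <-> (b s /\ meet0 (W w1 m2) (W w2 m2) s).
Proof.
  intros b Hb m1 m2 Hs s; simpl; unfold meet0_p; split; intros [H1 [H2 H3]]; repeat split; auto.
  - apply (W_compat w1 Hb Hs); auto.
  - apply (W_compat w2 Hb Hs); auto.
  - apply (W_compat' w1 Hb Hs); auto.
  - apply (W_compat' w2 Hb Hs); auto.
Qed.

Definition meet1 (w1 w2 : O1 T K) : O1 T K :=
  exist _ (fun m => meet0 (W w1 m) (W w2 m)) (meet1_ok w1 w2).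

Definition joinU (S : O1 T K -> Prop) (m : T unit) : Fin T -> Prop :=
  fun s => exists x, S x /\ W x m s.

Lemma joinU_up S m : upclosed (joinU S m).
Proof. intros s s' Hi [x [Hx H]]; exists x; split; auto; apply (up0 _ s); auto. Qed.

Lemma join1_ok (S : O1 T K -> Prop) : forall b : O0 T, complemented b -> forall m1 m2, sim_b K b m1 m2 ->
  forall s, (b s /\ clO (joinU S m1) s) <-> (b s /\ clO (joinU S m2) s).
Proof.
  intros b Hb m1 m2 Hs s; simpl.
  assert (gen : forall ma mb, (forall x s, b s -> W x ma s -> W x mb s) ->
     b s -> cl (joinU S ma) s -> cl (joinU S mb) s).
  { intros ma mb Hx Hbs Hc.
    assert (Hn : cl (fun s => b s /\ joinU S ma s) s).
    { apply nucleus; [intros s1 s2; apply up0 | apply joinU_up | apply cl_incl; auto | exact Hc]. }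
    revert Hn; apply cl_mono. intros s' [Hb' [x [HS Hxs]]]. exists x; split; [exact HS | apply (Hx x s'); auto]. }
  split; intros [H1 H2]; split; auto.
  - apply (gen m1 m2); auto. intros x s'; apply (W_compat x Hb Hs).
  - apply (gen m2 m1); auto. intros x s'; apply (W_compat' x Hb Hs).
Qed.

Definition join1 (S : O1 T K -> Prop) : O1 T K :=
  exist _ (fun m => clO (joinU S m)) (join1_ok S).

Definition topO : O0 T := clO (fun _ => True).
Lemma topO_all s : topO s.
Proof. apply cl_incl; auto. Qed.
Definition botO : O0 T := clO (fun _ => False).


Definition H1 (x y : T unit) : Fin T -> Prop := fun s =>
  exists (A : Type) (t : T A) (u u' : A -> T unit) (a : A),
    card_le A K /\ u a = u' a /\ x = bind t u /\ y = bind t u' /\ cl (gen (mapsto t a)) s.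

Lemma H1_up x y : upclosed (H1 x y).
Proof.
  intros s s' Hi [A [t [u [u' [a [H0 [H2 [H3 [H4 H5]]]]]]]]].
  exists A, t, u, u', a; repeat split; auto. apply (cl_up _ s); auto.
Qed.

Lemma chain_up (ms : list (T unit)) : forall x y s s', incl s s' -> chain K s x ms y -> chain K s' x ms y.
Proof.
  induction ms as [|m ms IH]; simpl; intros x y s s' Hi H.
  - apply (cl_up _ s); auto.
  - destruct H as [H H']; split; [apply (cl_up _ s) | apply (IH _ _ s)]; auto.
Qed.

Definition G (x y : T unit) : Fin T -> Prop := fun s => exists ms, chain K s x ms y.

Lemma G_up x y : upclosed (G x y).
Proof. intros s s' Hi [ms H]; exists ms; apply (chain_up ms x y s); auto. Qed.

Definition trP (x y : T unit) : Fin T -> Prop :=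
  fun s => tr1 K x y s \/ exists k, 2 <= k /\ trk K k x y s.

Lemma tr_G (x y : T unit) s : tr K x y s <-> cl (G x y) s.
Proof.
  split.
  - apply (cl_min (trP x y) (clO (G x y))). intros s' [H|[k [Hk H]]].
    + apply cl_incl. exists []; exact H.
    + revert H; apply cl_mono. intros s'' [ms [_ H]]. exists ms; exact H.
  - apply (cl_min (G x y) (clO (trP x y))). intros s' [ms H].
    apply cl_incl. right. exists (length ms + 2). split; [ | apply cl_incl; exists ms; split; auto].
    + lia.
    + lia.
Qed.

Lemma chain_app (ms : list (T unit)) : forall x y z ms' s, chain K s x ms y -> chain K s y ms' z ->
  chain K s x (ms ++ y :: ms') z.
Proof.
  induction ms as [|m ms IH]; simpl; intros x y z ms' s H1' H2'.
  - split; auto.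
  - destruct H1' as [A B]; split; auto.
Qed.

Lemma tr1_sym (x y : T unit) s : tr1 K x y s -> tr1 K y x s.
Proof.
  apply cl_mono. intros s' [A [t [u [u' [a [H0 [H2 [H3 [H4 H5]]]]]]]]].
  exists A, t, u', u, a; repeat split; auto.
Qed.

Lemma chain_snoc (ms : list (T unit)) : forall x m y s, chain K s x ms m -> tr1 K m y s -> chain K s x (ms ++ [m]) y.
Proof.
  induction ms as [|m0 ms IH]; simpl; intros x m y s Ha Hb.
  - split; auto.
  - destruct Ha; split; auto.
Qed.

Lemma chain_rev (ms : list (T unit)) : forall x y s, chain K s x ms y -> chain K s y (rev ms) x.
Proof.
  induction ms as [|m ms IH]; simpl; intros x y s H.
  - apply tr1_sym; auto.
  - destruct H as [Ha Hb]. apply chain_snoc; auto. apply tr1_sym; auto.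
Qed.

Lemma tr_sym (x y : T unit) s : tr K x y s -> tr K y x s.
Proof.
  rewrite !tr_G. apply cl_mono. intros s' [ms H]. exists (rev ms). apply chain_rev; auto.
Qed.

Lemma tr_trans (x y z : T unit) s : tr K x y s -> tr K y z s -> tr K x z s.
Proof.
  rewrite !tr_G. intros Ha Hb.
  assert (Hn := nucleus _ _ (G_up x y) (G_up y z) s Ha Hb).
  revert Hn; apply cl_mono. intros s' [[ms Hm] [ms' Hm']].
  exists (ms ++ y :: ms'). apply chain_app; auto.
Qed.

Lemma tr_refl (HK : card_le unit K) (m : T unit) s : tr K m m s.
Proof.
  apply cl_incl. left. apply cl_incl.
  exists unit, (mthen (ret tt) (ret tt)), (fun _ => m), (fun _ => m), tt.
  repeat split; auto.
  - unfold mthen. rewrite bind_assoc, bind_ret_l, bind_ret_l. reflexivity.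
  - unfold mthen. rewrite bind_assoc, bind_ret_l, bind_ret_l. reflexivity.
  - apply (R_ret (ret tt) tt (clO _)). intros; apply cl_incl; auto.
Qed.

Lemma tr1_transport (w : O1 T K) x y s : tr1 K x y s -> W w x s -> W w y s.
Proof.
  intros Ht Hw.
  assert (Hn := nucleus _ _ (H1_up x y) (fun s1 s2 => up0 (W w x) s1 s2) s Ht (cl_incl _ _ Hw)).
  revert Hn. apply (cl_min _ (W w y)).
  intros s' [[A [t [u [u' [a [H0 [H2 [H3 [H4 H5]]]]]]]]] Hw'].
  apply (W_compat w (mapsto_compl t a) (m1 := x) (m2 := y)) with (s := s'); auto.
  intros s'' Hs''. apply cl_incl. left. apply cl_incl.
  exists A, t, u, u', a; repeat split; auto.
Qed.

Lemma chain_transport (w : O1 T K) (ms : list (T unit)) : forall x y s, chain K s x ms y -> W w x s -> W w y s.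
Proof.
  induction ms as [|m ms IH]; simpl; intros x y s H Hw.
  - apply (tr1_transport w x y s); auto.
  - destruct H as [Ha Hb]. apply (IH m y s); auto. apply (tr1_transport w x m s); auto.
Qed.

Lemma tr_transport (w : O1 T K) x y s : tr K x y s -> W w x s -> W w y s.
Proof.
  rewrite tr_G. intros Ht Hw.
  assert (Hn := nucleus _ _ (G_up x y) (fun s1 s2 => up0 (W w x) s1 s2) s Ht (cl_incl _ _ Hw)).
  revert Hn. apply (cl_min _ (W w y)). intros s' [[ms H] Hw'].
  apply (chain_transport w ms x y s'); auto.
Qed.

Section Point.
Variable q : O1 T K -> bool.
Hypothesis Hq : frame_hom2 (@le1 T K) q.

Lemma q_top w : (forall m s, W w m s) -> q w = true.
Proof. intros H. apply (proj1 Hq). intros w' m s _. apply H. Qed.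

Lemma q_meet_eq w w1 w2 : le1 w w1 -> le1 w w2 -> (forall z, le1 z w1 -> le1 z w2 -> le1 z w) ->
  q w = andb (q w1) (q w2).
Proof. apply (proj1 (proj2 Hq)). Qed.

Lemma q_mono w w' : le1 w w' -> q w = true -> q w' = true.
Proof.
  intros Hle H. rewrite (q_meet_eq w w w') in H.
  - destruct (q w), (q w'); simpl in *; congruence.
  - intros m s; auto.
  - auto.
  - intros z H1 H2; auto.
Qed.

Lemma q_meet w1 w2 : q w1 = true -> q w2 = true -> q (meet1 w1 w2) = true.
Proof.
  intros H1 H2. rewrite (q_meet_eq (meet1 w1 w2) w1 w2).
  - rewrite H1, H2; auto.
  - intros m s [A B]; auto.
  - intros m s [A B]; auto.
  - intros z Z1 Z2 m s Hs; split; [apply Z1 | apply Z2]; auto.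
Qed.

Lemma q_join S : q (join1 S) = true -> exists x, S x /\ q x = true.
Proof.
  intros H. apply (proj2 (proj2 Hq) S (join1 S)); auto.
  - intros x Hx m s Hs. apply cl_incl. exists x; auto.
  - intros z Hz m. exact (cl_min _ (W z m) (fun s H => match H with ex_intro _ x (conj Hx Hs) => Hz x Hx m s Hs end)).
Qed.

Lemma q_bot : q (k0 botO) = false.
Proof.
  destruct (q (k0 botO)) eqn:E; auto.
  destruct (proj1 (proj2 (proj2 Hq) (fun _ => False) (k0 botO)
      (fun x H => False_ind _ H)
      (fun z _ m => cl_min _ (W z m) (fun s H => False_ind _ H))) E) as [x [[] _]].
Qed.

Definition g0 {A} (t : T A) (a : A) : O1 T K := k0 (clO (gen (mapsto t a))).

Lemma exists_gen {A} (t : T A) : exists a, q (g0 t a) = true.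
Proof.
  set (S := fun x => exists a, x = g0 t a).
  destruct (q_join S) as [x [[a ->] Hx]].
  - apply q_top. intros m s. unfold W; simpl.
    apply (cover t (clO (joinU S m))). intros a s' Hg. apply cl_incl.
    exists (g0 t a). split.
    + exists a; reflexivity.
    + unfold W; simpl. apply cl_incl; exact Hg.
  - exists a; exact Hx.
Qed.

Definition betaq [A : Type] (t : T A) : A :=
  proj1_sig (constructive_indefinite_description _ (exists_gen t)).

Lemma betaq_spec {A} (t : T A) : q (g0 t (betaq t)) = true.
Proof. unfold betaq. destruct (constructive_indefinite_description _ _); simpl; auto. Qed.

Lemma g0_uniq {A} (t : T A) a a' : q (g0 t a) = true -> q (g0 t a') = true -> a = a'.
Proof.
  intros H1 H2. destruct (classic (a = a')) as [|Hne]; auto. exfalso.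
  assert (Hm := q_meet _ _ H1 H2).
  assert (Hb : q (k0 botO) = true).
  { apply (q_mono (meet1 (g0 t a) (g0 t a'))); auto.
    intros m s [G1 G2]. unfold W in *; simpl in *.
    assert (Hn : cl (fun s => gen (mapsto t a) s /\ gen (mapsto t a') s) s).
    { apply nucleus; auto; apply gen_up. }
    revert Hn. apply (cl_min _ botO). intros s' [E1 E2].
    apply (R_disj t a a' botO Hne); auto. }
  rewrite q_bot in Hb; discriminate.
Qed.

Lemma betaq_eq {A} (t : T A) a : q (g0 t a) = true -> betaq t = a.
Proof. intros H. apply (g0_uniq t); auto. apply betaq_spec. Qed.

Lemma betaq_ret {A B} (t : T A) (c : B) : betaq (mthen t (ret c)) = c.
Proof.
  apply betaq_eq, q_top. intros m s. unfold W; simpl.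
  apply (R_ret t c (clO _)). intros; apply cl_incl; auto.
Qed.

Lemma betaq_bind {A B} (t : T A) (u : A -> T B) :
  betaq (bind t u) = betaq (mthen t (u (betaq t))).
Proof.
  set (a := betaq t). set (b := betaq (mthen t (u a))).
  apply betaq_eq. apply (q_mono (meet1 (g0 t a) (g0 (mthen t (u a)) b))).
  - intros m s [G1 G2]. unfold W in *; simpl in *.
    assert (Hn : cl (fun s => gen (mapsto t a) s /\ gen (mapsto (mthen t (u a)) b) s) s).
    { apply nucleus; auto; apply gen_up. }
    revert Hn. apply (cl_min _ (clO _)). intros s' [E1 E2].
    apply (R_bind t u b (clO _)) with a; auto. intros; apply cl_incl; auto.
  - apply q_meet; apply betaq_spec.
Qed.

Lemma betaq_adm : admissible betaq.
Proof.
  split.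
  - intros A B f t. unfold fmap. rewrite (betaq_bind t (fun a => ret (f a))).
    apply betaq_ret.
  - intros A B t u. apply betaq_bind.
Qed.


Hypothesis HK : card_le unit K.

Lemma wm_ok m : forall b : O0 T, complemented b -> forall m1 m2, sim_b K b m1 m2 ->
  forall s, (b s /\ clO (trP m m1) s) <-> (b s /\ clO (trP m m2) s).
Proof.
  intros b Hb m1 m2 Hs s; simpl; split; intros [Hbs Ht]; split; auto.
  - exact (tr_trans m m1 m2 s Ht (Hs s Hbs)).
  - exact (tr_trans m m2 m1 s Ht (tr_sym m1 m2 s (Hs s Hbs))).
Qed.

Definition wm m : O1 T K := exist _ (fun m' => clO (trP m m')) (wm_ok m).

Lemma exists_m0 : exists m, q (wm m) = true.
Proof.
  set (S := fun x => exists m, x = wm m).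
  destruct (q_join S) as [x [[m ->] Hx]].
  - apply q_top. intros m' s. unfold W; simpl. apply cl_incl.
    exists (wm m'); split; [exists m'; reflexivity | ].
    unfold W; simpl. exact (tr_refl HK m' s).
  - exists m; exact Hx.
Qed.

Definition m0 : T unit := proj1_sig (constructive_indefinite_description _ exists_m0).
Lemma m0_spec : q (wm m0) = true.
Proof. unfold m0. destruct (constructive_indefinite_description _ _); simpl; auto. Qed.

Definition truthq (s : Fin T) := forall b : T bool, In b s -> betaq b = true.
Definition upset (s : Fin T) : Fin T -> Prop := fun s' => incl s s'.
Lemma upset_up s : upclosed (upset s).
Proof. intros s1 s2 Hi H x Hx; apply Hi, H, Hx. Qed.

Lemma q_gen (b : T bool) : q (k0 (clO (gen b))) = true <-> betaq b = true.
Proof.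
  split; intros H.
  - apply betaq_eq. unfold g0. rewrite mapsto_true. exact H.
  - pose proof (betaq_spec b) as E. rewrite H in E. unfold g0 in E. rewrite mapsto_true in E. exact E.
Qed.

Lemma q_upset s : truthq s -> q (k0 (clO (upset s))) = true.
Proof.
  induction s as [|b s IH]; intros Ht.
  - apply q_top. intros m s'. unfold W; simpl. apply cl_incl. intros x [].
  - apply (q_mono (meet1 (k0 (clO (gen b))) (k0 (clO (upset s))))).
    + intros m s' [G1 G2]. unfold W in *; simpl in *.
      assert (Hn := nucleus _ _ (gen_up b) (upset_up s) s' G1 G2).
      revert Hn; apply cl_mono. intros s'' [E1 E2] x [<-|Hx]; auto.
    + apply q_meet.
      * apply q_gen, Ht; left; auto.
      * apply IH. intros x Hx; apply Ht; right; auto.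
Qed.

Lemma upset_truth s : q (k0 (clO (upset s))) = true -> truthq s.
Proof.
  intros H b Hb. apply q_gen. apply (q_mono (k0 (clO (upset s)))); auto.
  intros m s'. unfold W; simpl. apply cl_mono. intros s'' Hi. apply Hi, Hb.
Qed.

Lemma q_char w : q w = true <-> exists s, W w m0 s /\ truthq s.
Proof.
  split.
  - intros H.
    assert (H2 : q (k0 (W w m0)) = true).
    { apply (q_mono (meet1 w (wm m0))).
      - intros m s [A B]. unfold W in *; simpl in *.
        apply (tr_transport w m m0 s); auto. apply tr_sym. exact B.
      - apply q_meet; auto. apply m0_spec. }
    set (S := fun x => exists s, W w m0 s /\ x = k0 (clO (upset s))).
    destruct (q_join S) as [x [[s [Hs ->]] Hx]].
    + apply (q_mono (k0 (W w m0))); auto.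
      intros m s' Hs'. unfold W; simpl. apply cl_incl.
      exists (k0 (clO (upset s'))). split; [exists s'; auto | ].
      try unfold W; simpl. apply cl_incl. intros y Hy; exact Hy.
    + exists s; split; auto. apply upset_truth; auto.
  - intros [s [Hs Ht]].
    apply (q_mono (meet1 (wm m0) (k0 (clO (upset s))))).
    + intros m s' [A B]. unfold W in *; simpl in *.
      apply (tr_transport w m0 m s'); auto.
      revert B. apply (cl_min _ (W w m0)). intros s'' Hi. apply (up0 _ s); auto.
    + apply q_meet; [apply m0_spec | apply q_upset; auto].
Qed.

End Point.

Section Beh.
Variable beta : forall A : Type, T A -> A.
Hypothesis Hadm : admissible beta.

Definition truthb (s : Fin T) := forall b : T bool, In b s -> beta bool b = true.
Definition pb (D : Fin T -> Prop) := exists s, D s /\ truthb s.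

Lemma beta_mapsto {A} (t : T A) a : beta bool (mapsto t a) = delta a (beta A t).
Proof. exact (proj1 Hadm A bool (delta a) t). Qed.

Lemma delta_true {A} (a a' : A) : delta a a' = true <-> a' = a.
Proof.
  unfold delta. destruct (ClassicalDescription.excluded_middle_informative (a' = a)) as [e|n];
  split; intros H; auto; try discriminate; contradiction.
Qed.

Lemma beta_mapsto_true {A} (t : T A) a : beta bool (mapsto t a) = true <-> beta A t = a.
Proof. rewrite beta_mapsto. apply delta_true. Qed.

Lemma beta_ret {A B} (t : T A) (c : B) : beta B (mthen t (ret c)) = c.
Proof. exact (proj1 Hadm A B (fun _ => c) t). Qed.

Lemma truthb_app s1 s2 : truthb s1 -> truthb s2 -> truthb (s1 ++ s2).
Proof. intros H1 H2 b Hb; apply in_app_or in Hb; destruct Hb; auto. Qed.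

Lemma rel_truth (l r : Fin T -> Prop) : LB0_rel l r -> (pb l <-> pb r).
Proof.
  intros Hlr; destruct Hlr as [A t a a' Hne | A B t a | A B t u b]; split.
  - intros [s [[G1 G2] Ht]]. exfalso. apply Hne.
    pose proof (proj1 (beta_mapsto_true t a) (Ht _ G1)) as E1.
    pose proof (proj1 (beta_mapsto_true t a') (Ht _ G2)) as E2. congruence.
  - intros [s [[] _]].
  - intros _. exists []; split; [exact I | intros b []].
  - intros _. exists [mapsto (mthen t (ret a)) a]; split; [left; reflexivity | ].
    intros b [<-|[]]. apply beta_mapsto_true, beta_ret.
  - intros [s [G Ht]]. pose proof (proj1 (beta_mapsto_true _ _) (Ht _ G)) as G'. clear G.
    set (a := beta A t).
    exists [mapsto t a; mapsto (mthen t (u a)) b]. split.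
    + exists a; split; [left | right; left]; reflexivity.
    + intros x [<-|[<-|[]]]; apply beta_mapsto_true; auto.
      rewrite <- G'. symmetry. apply (proj2 Hadm).
  - intros [s [[a [G1 G2]] Ht]]. pose proof (proj1 (beta_mapsto_true _ _) (Ht _ G1)) as E1.
    pose proof (proj1 (beta_mapsto_true _ _) (Ht _ G2)) as E2.
    exists [mapsto (bind t u) b]. split; [left; reflexivity | ].
    intros x [<-|[]]. apply beta_mapsto_true. rewrite (proj2 Hadm). rewrite E1; auto.
Qed.

Definition Eb : Fin T -> Prop := fun s => ~ truthb s.
Lemma Eb_up : upclosed Eb.
Proof. intros s s' Hi H Ht. apply H. intros b Hb. apply Ht, Hi, Hb. Qed.

Lemma Eb_sat : saturated Eb.
Proof.
  intros l r Hlr s. destruct (rel_up _ _ Hlr) as [Ul Ur].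
  destruct (classic (truthb s)) as [Hs|Hs].
  - assert (aux : forall X : Fin T -> Prop, upclosed X ->
      (forall s', incl s s' -> X s' -> Eb s') <-> ~ pb X).
    { intros X UX; split.
      - intros H [s'' [HX Ht]]. apply (H (s'' ++ s)).
        + apply incl_app_r.
        + apply (UX s''); auto; apply incl_app_l.
        + apply truthb_app; auto.
      - intros H s' Hi HX Ht. apply H. exists s'; auto. }
    rewrite (aux l Ul), (aux r Ur). rewrite (rel_truth _ _ Hlr). tauto.
  - split; intros _ s' Hi _ Ht'; apply Hs; intros b Hb; apply Ht', Hi, Hb.
Qed.

Definition EbO : O0 T := MkO0 Eb_up Eb_sat.

Lemma pb_cl (P : Fin T -> Prop) : pb (cl P) -> pb P.
Proof.
  intros [s [Hc Ht]]. destruct (classic (pb P)) as [H|H]; auto. exfalso.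
  assert (HE : EbO s).
  { revert Hc. apply (cl_min _ EbO). intros s' HP Ht'. apply H. exists s'; auto. }
  apply HE, Ht.
Qed.

Lemma pb_up (D : O0 T) (E : O0 T) : pb D -> pb E -> pb (fun s => D s /\ E s).
Proof.
  intros [s1 [H1 T1]] [s2 [H2 T2]]. exists (s1 ++ s2); split.
  - split; [apply (up0 _ s1) | apply (up0 _ s2)]; auto; [apply incl_app_l | apply incl_app_r].
  - apply truthb_app; auto.
Qed.

Hypothesis Hrank : has_rank T K.

Lemma step_iff (w : O1 T K) m1 m2 : beh_step beta m1 m2 -> (pb (W w m1) <-> pb (W w m2)).
Proof.
  intros [A [t [u [E1 E2]]]].
  destruct (Hrank A t) as [I [t' [f [Hlt Ht]]]].
  set (a := beta I t').
  assert (Hbt : beta A t = f a).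
  { rewrite Ht. exact (proj1 Hadm I A f t'). }
  assert (Hsim : sim_b K (clO (gen (mapsto t' a))) m1 m2).
  { intros s Hs. apply cl_incl. left. apply cl_incl.
    exists I, t', (fun i => u (f i)), (fun _ => u (beta A t)), a.
    repeat split.
    - exact (proj1 Hlt).
    - rewrite Hbt; reflexivity.
    - rewrite E1, Ht, bind_assoc. f_equal. apply functional_extensionality; intros i.
      apply bind_ret_l.
    - rewrite E2. generalize (u (beta A t)). intros X. unfold mthen. rewrite Ht, bind_assoc. f_equal.
      apply functional_extensionality; intros i. apply bind_ret_l.
    - exact Hs. }
  assert (Hb0 : pb (clO (gen (mapsto t' a)))).
  { exists [mapsto t' a]; split.
    - apply cl_incl; left; reflexivity.
    - intros x [<-|[]]. apply beta_mapsto_true; reflexivity. }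
  pose proof (mapsto_compl t' a) as Hc.
  split; intros H.
  - destruct (pb_up _ _ H Hb0) as [s [[Hw Hbs] Hts]].
    exists s; split; auto. apply (W_compat w Hc Hsim s); auto.
  - destruct (pb_up _ _ H Hb0) as [s [[Hw Hbs] Hts]].
    exists s; split; auto. apply (W_compat' w Hc Hsim s); auto.
Qed.

Lemma beh_inv (w : O1 T K) m1 m2 : beh_eq beta m1 m2 -> (pb (W w m1) <-> pb (W w m2)).
Proof.
  intros H; induction H.
  - apply step_iff; auto.
  - tauto.
  - tauto.
  - tauto.
Qed.

Variable C : T unit -> Prop.
Hypothesis HC : is_beh_class beta C.

Definition qb (w : O1 T K) : bool :=
  if ClassicalDescription.excluded_middle_informative (exists m, C m /\ pb (W w m)) then true else false.

Lemma qb_true w : qb w = true <-> exists m, C m /\ pb (W w m).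
Proof.
  unfold qb. destruct (ClassicalDescription.excluded_middle_informative _) as [e|n];
  split; intros H; auto; try discriminate; contradiction.
Qed.

Lemma C_rep : exists m, C m.
Proof. destruct HC as [t Ht]. exists t. apply Ht. apply rst_refl. Qed.

Lemma C_eq m1 m2 : C m1 -> C m2 -> beh_eq beta m1 m2.
Proof.
  destruct HC as [t Ht]. intros H1 H2. apply Ht in H1, H2.
  apply rst_trans with t; auto. apply rst_sym; auto.
Qed.

Lemma qb_mono w w' : le1 w w' -> qb w = true -> qb w' = true.
Proof.
  intros Hle H. apply qb_true in H. apply qb_true. destruct H as [m [Cm [s [Hs Ht]]]].
  exists m; split; auto. exists s; split; auto. apply Hle; auto.
Qed.

Lemma bool_and_iff (a b c : bool) : (a = true <-> b = true /\ c = true) -> a = andb b c.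
Proof. destruct a, b, c; simpl; intuition congruence. Qed.

Lemma qb_hom : frame_hom2 (@le1 T K) qb.
Proof.
  split; [ | split].
  - intros w Hw. apply qb_true. destruct C_rep as [m Cm]. exists m; split; auto.
    exists []; split; [ | intros b []]. apply (Hw (k0 topO) m []). apply topO_all.
  - intros w w1 w2 L1 L2 Hg. apply bool_and_iff. split.
    + intros H; split; apply (qb_mono w); auto.
    + intros [Q1 Q2]. apply qb_true in Q1, Q2. apply qb_true.
      destruct Q1 as [m1 [C1 P1]]. destruct Q2 as [m2 [C2 P2]].
      apply (beh_inv w2 _ _ (C_eq _ _ C2 C1)) in P2.
      exists m1; split; auto.
      destruct (pb_up _ _ P1 P2) as [s [Hs Ht]]. exists s; split; auto.
      apply (Hg (meet1 w1 w2)); auto.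
      * intros m s' [A B]; auto.
      * intros m s' [A B]; auto.
  - intros S w Hub Hlub. split.
    + intros H. apply qb_true in H. destruct H as [m [Cm Pm]].
      assert (Hle : le1 w (join1 S)).
      { apply Hlub. intros x Hx m' s Hs. apply cl_incl. exists x; auto. }
      assert (P2 : pb (cl (joinU S m))).
      { destruct Pm as [s [Hs Ht]]. exists s; split; auto. apply (Hle m s Hs). }
      apply pb_cl in P2. destruct P2 as [s [[x [Sx Hx]] Ht]].
      exists x; split; auto. apply qb_true. exists m; split; auto. exists s; auto.
    + intros [x [Sx Qx]]. apply (qb_mono x); auto.
Qed.


Lemma tr1_sound x y s : tr1 K x y s -> truthb s -> beh_eq beta x y.
Proof.
  intros H Ht.
  assert (P : pb (cl (H1 x y))) by (exists s; auto).
  apply pb_cl in P. destruct P as [s' [[A [t [u [u' [a [_ [Hu [Ex [Ey Hg]]]]]]]]] Ht']].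
  assert (P : pb (cl (gen (mapsto t a)))) by (exists s'; auto).
  apply pb_cl in P. destruct P as [s'' [G Ht'']].
  pose proof (proj1 (beta_mapsto_true _ _) (Ht'' _ G)) as Hb.
  subst x y. apply rst_trans with (mthen t (u a)).
  - apply rst_step. exists A, t, u. split; [reflexivity | rewrite Hb; reflexivity].
  - apply rst_sym, rst_step. exists A, t, u'. split; [reflexivity | rewrite Hb, Hu; reflexivity].
Qed.

Lemma chain_sound (ms : list (T unit)) : forall x y s, chain K s x ms y -> truthb s -> beh_eq beta x y.
Proof.
  induction ms as [|m ms IH]; simpl; intros x y s H Ht.
  - apply (tr1_sound x y s); auto.
  - destruct H as [Ha Hb]. apply rst_trans with m.
    + apply (tr1_sound x m s); auto.
    + apply (IH m y s); auto.
Qed.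

Lemma tr_sound x y : pb (tr K x y) -> beh_eq beta x y.
Proof.
  intros P. apply pb_cl in P. destruct P as [s [[H|[k [_ Hk]]] Ht]].
  - apply (tr1_sound x y s); auto.
  - assert (P : pb (cl (fun s => exists ms, length ms = k - 2 /\ chain K s x ms y))) by (exists s; auto).
    apply pb_cl in P. destruct P as [s' [[ms [_ Hc]] Ht']].
    apply (chain_sound ms x y s'); auto.
Qed.

End Beh.
End Frame1.


Lemma sig_ext (A : Type) (P : A -> Prop) (x y : sig P) : proj1_sig x = proj1_sig y -> x = y.
Proof. destruct x as [x hx], y as [y hy]; simpl; intros ->. f_equal. apply proof_irrelevance. Qed.

Lemma B1_ext (T : monad) (x y : B1 T) :
  proj1_sig (projT1 x) = proj1_sig (projT1 y) ->
  (forall m, proj1_sig (projT2 x) m <-> proj1_sig (projT2 y) m) -> x = y.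
Proof.
  destruct x as [[b1 h1] [c1 k1]], y as [[b2 h2] [c2 k2]]; simpl. intros E HC.
  subst b2. assert (h1 = h2) by apply proof_irrelevance. subst h2.
  assert (c1 = c2).
  { apply functional_extensionality; intros m. apply propositional_extensionality; auto. }
  subst c2. assert (k1 = k2) by apply proof_irrelevance. subst k2. reflexivity.
Qed.

Lemma class_of (T : monad) (beta : forall A : Type, T A -> A) (m : T unit) :
  is_beh_class beta (beh_eq beta m).
Proof. exists m; intros x; tauto. Qed.

Lemma bool_iff_eq (a b : bool) : (a = true <-> b = true) -> a = b.
Proof. destruct a, b; intuition congruence. Qed.

Theorem proposition3p13 (T : monad) (K : Type) :
  regular K -> has_rank T K -> in_bijection (pt_LB1 T K) (B1 T).
Proof.
  intros Hreg Hrank.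
  assert (HK : card_le unit K).
  { destruct Hreg as [[f Hf] _]. exists (fun _ => f 0). intros [] [] _; reflexivity. }
  set (F := fun p : pt_LB1 T K =>
    existT (fun bp : { beta : forall A : Type, T A -> A | admissible beta } =>
              { C : T unit -> Prop | is_beh_class (proj1_sig bp) C })
      (exist (fun beta : forall A : Type, T A -> A => admissible beta)
         (betaq T K (proj1_sig p) (proj2_sig p)) (betaq_adm T K (proj1_sig p) (proj2_sig p)))
      (exist (fun C : T unit -> Prop => is_beh_class (betaq T K (proj1_sig p) (proj2_sig p)) C)
         (beh_eq (betaq T K (proj1_sig p) (proj2_sig p)) (m0 T K (proj1_sig p) (proj2_sig p) HK))
         (class_of T (betaq T K (proj1_sig p) (proj2_sig p)) (m0 T K (proj1_sig p) (proj2_sig p) HK)))).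
  set (Gb := fun y : B1 T =>
    exist (fun p : O1 T K -> bool => frame_hom2 (@le1 T K) p)
      (qb T K (proj1_sig (projT1 y)) (proj1_sig (projT2 y)))
      (qb_hom T K (proj1_sig (projT1 y)) (proj2_sig (projT1 y)) Hrank
         (proj1_sig (projT2 y)) (proj2_sig (projT2 y)))).
  exists F, Gb. split.
  - intros [q Hq]. apply sig_ext. simpl.
    apply functional_extensionality; intros w. apply bool_iff_eq.
    rewrite qb_true, (q_char T K q Hq HK w). split.
    + intros [m [Hm P]].
      apply (beh_inv T K _ (betaq_adm T K q Hq) Hrank w _ _ (rst_sym _ _ _ _ Hm)) in P.
      exact P.
    + intros P. exists (m0 T K q Hq HK). split; [apply rst_refl | exact P].
  - intros [[beta Hadm] [C HC]].
    set (q := qb T K beta C). set (Hq := qb_hom T K beta Hadm Hrank C HC).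
    assert (Hb : betaq T K q Hq = beta).
    { apply functional_extensionality_dep; intros A. apply functional_extensionality; intros t.
      apply betaq_eq. apply qb_true. destruct (C_rep T beta C HC) as [m Cm].
      exists m; split; auto. exists [mapsto t (beta A t)]; split.
      - apply cl_incl; left; reflexivity.
      - intros x [<-|[]]. apply (beta_mapsto_true T beta Hadm); reflexivity. }
    apply B1_ext; simpl.
    + exact Hb.
    + fold q. fold Hq. rewrite Hb. intros x.
      pose proof (m0_spec T K q Hq HK) as Hm.
      apply qb_true in Hm. destruct Hm as [m [Cm Pm]].
      apply (tr_sound T K beta Hadm) in Pm.
      destruct HC as [t0 Ht0]. rewrite Ht0. apply Ht0 in Cm.
      split; intros H.
      * apply rst_trans with (m0 T K q Hq HK); auto. apply rst_trans with m; auto. apply rst_sym; auto.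
      * apply rst_trans with t0; auto. apply rst_trans with m; auto. apply rst_sym; auto.
Qed.
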